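(* Let $R$ be a commutative ring. The pair $({}^{\perp}\mathrm{Rel}_R(\varkappa),\mathrm{Rel}_R(\varkappa))$ is a torsion pair in $\mathrm{Rep}_R(\varkappa)$, and it is split if and only if $R$ is a finite product of fields.
   Context: $\mathrm{Rep}_R(\varkappa)$ is the (abelian) category of representations of the Kronecker quiver: objects $(M_t,M_h;\mu_a,\mu_b)$ with $M_t,M_h$ $R$-modules and $\mu_a,\mu_b\in\mathrm{Hom}_R(M_t,M_h)$; morphisms pairs $(f_t,f_h)$ of $R$-linear maps with $f_h\mu_c=\mu'_cf_t$ for $c=a,b$. $\mathrm{Rel}_R(\varkappa)$ is the full subcategory of objects with $\ker(\mu_a)\cap\ker(\mu_b)=0$, and ${}^{\perp}\mathrm{Rel}_R(\varkappa)$ is the full subcategory of objects $T$ with $\mathrm{Hom}(T,F)=0$ for all $F\in\mathrm{Rel}_R(\varkappa)$. A torsion pair $(\mathcal{T},\mathcal{F})$: $\mathrm{Hom}(\mathcal{T},\mathcal{F})=0$ and every object $M$ has a short exact sequence $0\to T_M\to M\to F_M\to0$ with $T_M\in\mathcal{T}$, $F_M\in\mathcal{F}$; it is split if this sequence splits for every $M$. *)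

(* Defs.v *)
From HB Require Import structures.
From mathcomp Require Import all_boot all_algebra.
Set Implicit Arguments. Unset Strict Implicit. Unset Printing Implicit Defensive.
Import GRing.Theory.
Local Open Scope ring_scope.

(* Representations of the Kronecker quiver over a ring R:
   (M_t, M_h; mu_a, mu_b) with R-linear mu_a, mu_b : M_t -> M_h. *)
Record krep (R : pzRingType) := KRep {
  Mt : lmodType R;
  Mh : lmodType R;
  mua : {linear Mt -> Mh};
  mub : {linear Mt -> Mh} }.

Record khom (R : pzRingType) (M N : krep R) := KHom {
  ft : {linear Mt M -> Mt N};
  fh : {linear Mh M -> Mh N};
  comm_a : forall x, fh (mua M x) = mua N (ft x);
  comm_b : forall x, fh (mub M x) = mub N (ft x) }.

Definition zero_hom (R : pzRingType) (M N : krep R) (f : khom M N) : Prop :=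
  (forall x, ft f x = 0) /\ (forall y, fh f y = 0).

Definition isRel (R : pzRingType) (F : krep R) : Prop :=
  forall x : Mt F, mua F x = 0 -> mub F x = 0 -> x = 0.

Definition isPerpRel (R : pzRingType) (T : krep R) : Prop :=
  forall F : krep R, isRel F -> forall f : khom T F, zero_hom f.

Definition short_exact (R : pzRingType) (T M F : krep R)
    (f : khom T M) (g : khom M F) : Prop :=
  [/\ injective (ft f) /\ injective (fh f),
      (forall y, exists x, ft g x = y) /\ (forall y, exists x, fh g x = y) &
      (forall x, ft g x = 0 <-> exists z, ft f z = x) /\
      (forall x, fh g x = 0 <-> exists z, fh f z = x)].

Definition ses_splits (R : pzRingType) (M F : krep R) (g : khom M F) : Prop :=
  exists s : khom F M, (forall y, ft g (ft s y) = y) /\ (forall y, fh g (fh s y) = y).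

Definition torsion_pair (R : pzRingType) (Tc Fc : krep R -> Prop) : Prop :=
  (forall (T F : krep R), Tc T -> Fc F -> forall f : khom T F, zero_hom f) /\
  (forall M : krep R, exists (T F : krep R) (f : khom T M) (g : khom M F),
      [/\ Tc T, Fc F & short_exact f g]).

Definition split_torsion_pair (R : pzRingType) (Tc Fc : krep R -> Prop) : Prop :=
  torsion_pair Tc Fc /\
  (forall (T M F : krep R) (f : khom T M) (g : khom M F),
      Tc T -> Fc F -> short_exact f g -> ses_splits g).

(* R is isomorphic (as a ring) to a finite product of fields F_0 x ... x F_{n-1};
   n = 0 gives the zero ring. *)
Definition finite_product_of_fields (R : comPzRingType) : Prop :=
  exists (n : nat) (K : 'I_n -> fieldType) (phi : R -> forall i, K i),
    [/\ bijective phi,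
        (forall i, phi 1 i = 1),
        (forall x y i, phi (x + y) i = phi x i + phi y i) &
        (forall x y i, phi (x * y) i = phi x i * phi y i)].

(* Main.v *)
Require Import Defs.
From HB Require Import structures.
From mathcomp Require Import all_boot all_algebra.
From mathcomp Require Import generic_quotient.
From mathcomp Require Import boolp classical_sets.
Set Implicit Arguments. Unset Strict Implicit. Unset Printing Implicit Defensive.
Import GRing.Theory.
Local Open Scope ring_scope.

Definition mklin (R : pzRingType) (U V : lmodType R) (f : U -> V) (H : linear f) : {linear U -> V} :=
  HB.pack f (GRing.isLinear.Build _ _ _ _ f H).
Lemma mklinE (R : pzRingType) (U V : lmodType R) (f : U -> V) (H : linear f) x : mklin H x = f x.
Proof. by []. Qed.

Section Tors.
Variables (R : pzRingType) (M : krep R).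
Definition kerP : {pred Mt M} := fun x => (mua M x == 0) && (mub M x == 0).
Lemma kerP_closed : subsemimod_closed kerP.
Proof.
split; [split|].
- by rewrite /kerP unfold_in /= !linear0 eqxx.
- move=> x y; rewrite !unfold_in /= => /andP[/eqP ax /eqP bx] /andP[/eqP ay /eqP by_].
  by rewrite !linearD ax bx ay by_ addr0 eqxx.
- move=> c x; rewrite !unfold_in /= => /andP[/eqP ax /eqP bx].
  by rewrite !linearZZ ax bx scaler0 eqxx.
Qed.
HB.instance Definition _ := GRing.isSubmodClosed.Build R (Mt M) kerP kerP_closed.
Record KT := MkKT { kval : Mt M; kvalP : kval \in kerP }.
HB.instance Definition _ := [isSub for kval].
HB.instance Definition _ := [Choice of KT by <:].
HB.instance Definition _ := [SubChoice_isSubLmodule of KT by <:].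

Definition imP : {pred (Mh M * Mh M)%type} := fun p => `[< exists x, p = (mua M x, mub M x) >].
Lemma imP_closed : subsemimod_closed imP.
Proof.
split; [split|].
- rewrite unfold_in; apply/asboolP; exists 0; by rewrite !linear0.
- move=> p q; rewrite !unfold_in => /asboolP[x ->] /asboolP[y ->]; apply/asboolP.
  by exists (x + y); rewrite !linearD.
- move=> c p; rewrite !unfold_in => /asboolP[x ->]; apply/asboolP.
  by exists (c *: x); rewrite !linearZZ.
Qed.
HB.instance Definition _ := GRing.isSubmodClosed.Build R _ imP imP_closed.
Record IT := MkIT { ival : (Mh M * Mh M)%type; ivalP : ival \in imP }.
HB.instance Definition _ := [isSub for ival].
HB.instance Definition _ := [Choice of IT by <:].
HB.instance Definition _ := [SubChoice_isSubLmodule of IT by <:].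


Lemma zlin (U V : lmodType R) : linear (fun _ : U => (0 : V)).
Proof. by move=> c x y; rewrite scaler0 addr0. Qed.
Definition Tr : krep R := @KRep R KT ('rV[R]_0) (mklin (@zlin _ _)) (mklin (@zlin _ _)).
Lemma ga_lin : linear (fun x : Mt M => (mua M x, mub M x)).
Proof. by move=> c x y; rewrite !linearP. Qed.
Lemma gt_in x : (mua M x, mub M x) \in imP.
Proof. by rewrite unfold_in; apply/asboolP; exists x. Qed.
Definition gtf (x : Mt M) : IT := MkIT (gt_in x).
Lemma gtf_lin : linear gtf.
Proof. by move=> c x y; apply: val_inj => /=; rewrite !linearP. Qed.
Lemma fst_lin : linear (fun p : IT => (ival p).1).
Proof. by move=> c x y. Qed.
Lemma snd_lin : linear (fun p : IT => (ival p).2).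
Proof. by move=> c x y. Qed.
Definition Fr : krep R := @KRep R IT (Mh M) (mklin fst_lin) (mklin snd_lin).
Lemma kval_lin : linear (kval : KT -> Mt M).
Proof. by move=> c x y. Qed.
Lemma id_lin (U : lmodType R) : linear (fun x : U => x).
Proof. by []. Qed.
Definition ftr : khom Tr M.
refine (@KHom R Tr M (mklin kval_lin) (mklin (@zlin _ _)) _ _).
- by move=> [x /= /andP[/eqP ax _]]; rewrite /= ax.
- by move=> [x /= /andP[_ /eqP bx]]; rewrite /= bx.
Defined.
Definition gtr : khom M Fr.
refine (@KHom R M Fr (mklin gtf_lin) (mklin (@id_lin _)) _ _).
- by [].
- by [].
Defined.
End Tors.

Lemma rV0_eq0 (R : pzRingType) (x : 'rV[R]_0) : x = 0.
Proof. exact: thinmx0. Qed.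

Lemma perp_of_trivial (R : pzRingType) (T : krep R) :
  (forall y : Mh T, y = 0) -> isPerpRel T.
Proof.
move=> h0 F RF f; split.
- move=> x; apply: RF.
  + by rewrite -comm_a (h0 (mua T x)) linear0.
  + by rewrite -comm_b (h0 (mub T x)) linear0.
- by move=> y; rewrite (h0 y) linear0.
Qed.

Lemma Fr_rel (R : pzRingType) (M : krep R) : isRel (Fr M).
Proof.
move=> [[p q] Hp] /= h1 h2; apply: val_inj => /=.
by rewrite /= in h1 h2; rewrite h1 h2.
Qed.

Lemma tors_ses (R : pzRingType) (M : krep R) : short_exact (ftr M) (gtr M).
Proof.
split.
- split; first by move=> x y /= h; apply: val_inj.
  by move=> x y _; rewrite (rV0_eq0 x) (rV0_eq0 y).
- split; last by move=> y; exists y.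
  move=> [p Hp]; have := Hp; rewrite {1}unfold_in => /asboolP[x ex].
  by exists x; apply: val_inj => /=; rewrite ex.
- split.
  + move=> x; split.
    * move=> /(congr1 val) /= [ax bx].
      have Hx : x \in @kerP _ M by rewrite unfold_in /= ax bx !eqxx.
      by exists (MkKT Hx).
    * move=> [[z Hz] <-]; apply: val_inj; have := Hz; rewrite {1}unfold_in /= => /andP[/eqP az /eqP bz].
      by rewrite /= az bz.
  + move=> y; split; first by move=> /= ->; exists 0.
    by move=> [z <-].
Qed.

Lemma part1 (R : pzRingType) : torsion_pair (@isPerpRel R) (@isRel R).
Proof.
split; first by move=> T F PT RF f; exact: PT.
move=> M; exists (Tr M), (Fr M), (ftr M), (gtr M); split.
- by apply: perp_of_trivial => y; exact: rV0_eq0.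
- exact: Fr_rel.
- exact: tors_ses.
Qed.
Local Open Scope quotient_scope.

Record subm (R : pzRingType) (V : lmodType R) := Subm {
  smem : V -> Prop;
  sm0 : smem 0;
  smD : forall x y, smem x -> smem y -> smem (x + y);
  smZ : forall a x, smem x -> smem (a *: x) }.

Section Quot.
Variables (R : pzRingType) (V : lmodType R) (S : subm V).
Let N := smem S.
Lemma smN x : N x -> N (- x).
Proof. by move=> h; rewrite -scaleN1r; apply: smZ. Qed.
Lemma smB x y : N x -> N y -> N (x - y).
Proof. by move=> hx hy; apply: smD => //; apply: smN. Qed.

Definition qr (x y : V) : bool := `[< N (x - y) >].
Lemma qr_refl : reflexive qr.
Proof. by move=> x; apply/asboolP; rewrite subrr; apply: sm0. Qed.
Lemma qr_sym : symmetric qr.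
Proof.
move=> x y; apply/asboolP/asboolP => /smN; by rewrite opprB.
Qed.
Lemma qr_trans : transitive qr.
Proof.
move=> y x z /asboolP h1 /asboolP h2; apply/asboolP.
by have := smD h1 h2; rewrite addrA subrK.
Qed.
Definition qe := EquivRel qr qr_refl qr_sym qr_trans.
Definition Q := {eq_quot qe}.
HB.instance Definition _ : EqQuotient _ qe Q := EqQuotient.on Q.
HB.instance Definition _ := Choice.on Q.

Definition qpi (x : V) : Q := \pi_Q x.
Lemma qpiP x y : qpi x = qpi y <-> N (x - y).
Proof.
split.
- by move/eqquotP => /asboolP.
- by move=> h; apply/eqquotP/asboolP.
Qed.
Lemma qind (P : Q -> Prop) : (forall x, P (qpi x)) -> forall a, P a.
Proof. by move=> h a; rewrite -[a]reprK; apply: h. Qed.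
Lemma qreprK a : qpi (repr a) = a.
Proof. exact: reprK. Qed.

Definition qzero : Q := qpi 0.
Definition qadd (a b : Q) : Q := qpi (repr a + repr b).
Definition qopp (a : Q) : Q := qpi (- repr a).
Definition qscale (c : R) (a : Q) : Q := qpi (c *: repr a).

Lemma qaddE x y : qadd (qpi x) (qpi y) = qpi (x + y).
Proof.
apply/qpiP; rewrite /qadd.
have h1 : N (repr (qpi x) - x) by apply/qpiP; rewrite qreprK.
have h2 : N (repr (qpi y) - y) by apply/qpiP; rewrite qreprK.
have := smD h1 h2. congr N. by rewrite opprD addrACA.
Qed.
Lemma qoppE x : qopp (qpi x) = qpi (- x).
Proof.
apply/qpiP; rewrite /qopp.
have h1 : N (repr (qpi x) - x) by apply/qpiP; rewrite qreprK.
by have := smN h1; rewrite opprB opprK addrC.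
Qed.
Lemma qscaleE c x : qscale c (qpi x) = qpi (c *: x).
Proof.
apply/qpiP; rewrite /qscale.
have h1 : N (repr (qpi x) - x) by apply/qpiP; rewrite qreprK.
by have := smZ c h1; rewrite scalerBr.
Qed.

Lemma qaddA : associative qadd.
Proof.
by elim/qind => x; elim/qind => y; elim/qind => z; rewrite !qaddE addrA.
Qed.
Lemma qaddC : commutative qadd.
Proof. by elim/qind => x; elim/qind => y; rewrite !qaddE addrC. Qed.
Lemma qadd0 : left_id qzero qadd.
Proof. by elim/qind => x; rewrite /qzero qaddE add0r. Qed.
Lemma qaddN : left_inverse qzero qopp qadd.
Proof. by elim/qind => x; rewrite qoppE qaddE addNr. Qed.
HB.instance Definition _ := GRing.isZmodule.Build Q qaddA qaddC qadd0 qaddN.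
Lemma qpiD x y : qpi x + qpi y = qpi (x + y).
Proof. exact: qaddE. Qed.

Lemma qscaleA a b v : qscale a (qscale b v) = qscale (a * b) v.
Proof. by elim/qind: v => x; rewrite !qscaleE scalerA. Qed.
Lemma qscale1 : left_id 1 qscale.
Proof. by elim/qind => x; rewrite qscaleE scale1r. Qed.
Lemma qscaleDr : right_distributive qscale +%R.
Proof.
move=> c; elim/qind => x; elim/qind => y.
by rewrite (qpiD x y) !qscaleE (qpiD (c *: x)) scalerDr.
Qed.
Lemma qscaleDl v : {morph qscale^~ v : a b / a + b}.
Proof.
elim/qind: v => x a b.
by rewrite !qscaleE (qpiD (a *: x)) scalerDl.
Qed.
HB.instance Definition _ := GRing.Zmodule_isLmodule.Build R Q qscaleA qscale1 qscaleDr qscaleDl.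

Lemma qpi_lin : linear qpi.
Proof.
move=> c x y.
by rewrite -(qpiD (c *: x) y) -(qscaleE c x).
Qed.
Lemma qpi0 x : qpi x = 0 <-> N x.
Proof.
have -> : (0 : Q) = qpi 0 by [].
by rewrite qpiP subr0.
Qed.
End Quot.

Local Close Scope quotient_scope.

Definition SS (R : pzRingType) := forall (U V : lmodType R) (g : {linear U -> V}),
  (forall y, exists x, g x = y) -> exists s : {linear V -> U}, forall y, g (s y) = y.

Lemma perp_trivial (R : pzRingType) (T : krep R) : isPerpRel T -> forall y : Mh T, y = 0.
Proof.
move=> PT y; have [_ h] := PT (Fr T) (@Fr_rel R T) (gtr T).
exact: (h y).
Qed.

Lemma split_of_SS (R : pzRingType) : SS R ->
  forall (T M F : krep R) (f : khom T M) (g : khom M F),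
      isPerpRel T -> isRel F -> short_exact f g -> ses_splits g.
Proof.
move=> hSS T M F f g PT RF [[_ _] [sut suh] [_ exh]].
have T0 := perp_trivial PT.
have ghinj : injective (fh g).
  move=> y1 y2 e; apply/eqP; rewrite -subr_eq0; apply/eqP.
  have /exh [z <-] : fh g (y1 - y2) = 0 by rewrite linearB e subrr.
  by rewrite (T0 z) linear0.
have [st hst] := hSS _ _ (ft g) sut.
pose hinv y := projT1 (cid (suh y)).
have hinvK y : fh g (hinv y) = y by rewrite /hinv; case: cid.
have hinv_lin : linear hinv.
  by move=> c x y; apply: ghinj; rewrite linearP !hinvK.
pose sh := mklin hinv_lin.
have ca : forall y, sh (mua F y) = mua M (st y).
  by move=> y; apply: ghinj; rewrite mklinE hinvK comm_a hst.
have cb : forall y, sh (mub F y) = mub M (st y).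
  by move=> y; apply: ghinj; rewrite mklinE hinvK comm_b hst.
exists (KHom ca cb); split => y /=; first exact: hst.
exact: hinvK.
Qed.

Local Open Scope classical_set_scope.
Definition ideal (R : comPzRingType) (I : R -> Prop) :=
  I 0 /\ (forall x y, I x -> I y -> I (x + y)) /\ (forall r x, I x -> I (r * x)).
Definition H1 (R : comPzRingType) :=
  forall I : R -> Prop, ideal I -> exists e, I e /\ forall r, I r -> r * e = r.

Lemma SS_of_H1 (R : comPzRingType) : H1 R -> SS R.
Proof.
move=> hH U V g gsurj.
pose P (A : set U) := (forall x y, A x -> A y -> A (x + y)) /\
  (forall (r : R) x, A x -> A (r *: x)) /\ (forall x, A x -> g x = 0 -> x = 0).
have chainP : forall F : set (set U), F `<=` P -> total_on F subset ->
    P (\bigcup_(X in F) X).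
  move=> F FP tot; split; [|split].
  - move=> x y [X FX Xx] [Y FY Yy]; have [XY|YX] := tot _ _ FX FY.
    + exists Y => //; have [h _] := FP _ FY; apply: h => //; exact: XY.
    + exists X => //; have [h _] := FP _ FX; apply: h => //; exact: YX.
  - move=> r x [X FX Xx]; exists X => //; have [_ [h _]] := FP _ FX; exact: h.
  - move=> x [X FX Xx]; have [_ [_ h]] := FP _ FX; exact: h.
have [A [PA Amax]] := Zorn_bigcup chainP.
case: (PA) => AD [AZ Adisj].
pose C0 c := A c \/ c = 0.
have C0D : forall x y, C0 x -> C0 y -> C0 (x + y).
  move=> x y [ax|->] [ay|->]; rewrite ?addr0 ?add0r;
    by [left; exact: AD | left | right].
have C0Z : forall (r : R) x, C0 x -> C0 (r *: x).
  by move=> r x [ax|->]; [left; exact: AZ | right; exact: scaler0].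
have C0N : forall x, C0 x -> C0 (- x).
  by move=> x h; rewrite -scaleN1r; apply: C0Z.
have C0disj : forall x, C0 x -> g x = 0 -> x = 0.
  by move=> x [ax|->] // gx; exact: Adisj.
have dec : forall x, exists c, C0 c /\ g (x - c) = 0.
  move=> x; apply: contrapT => nd.
  pose J (r : R) := exists c, C0 c /\ g (r *: x - c) = 0.
  have Jid : ideal J.
    split; [|split].
    - by exists 0; split; [right| rewrite scale0r subr0 linear0].
    - move=> r1 r2 [c1 [h1 e1]] [c2 [h2 e2]]; exists (c1 + c2); split; first exact: C0D.
      by rewrite scalerDl opprD addrACA linearD e1 e2 addr0.
    - move=> r r' [c [h e]]; exists (r *: c); split; first exact: C0Z.
      by rewrite -scalerA -scalerBr linearZZ e scaler0.
  have [e [Je eJ]] := hH J Jid.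
  have ee : e * e = e := eJ e Je.
  pose y := (1 - e) *: x.
  pose A' z := exists c (r : R), C0 c /\ z = c + r *: y.
  have AA' : A `<=` A' by move=> z Az; exists z, 0; split; [left|rewrite scale0r addr0].
  have PA' : P A'.
    split; [|split].
    - move=> z1 z2 [c1 [r1 [h1 ->]]] [c2 [r2 [h2 ->]]]; exists (c1 + c2), (r1 + r2).
      by split; [exact: C0D | rewrite scalerDl addrACA].
    - move=> r z [c [r1 [h ->]]]; exists (r *: c), (r * r1).
      by split; [exact: C0Z | rewrite scalerDr scalerA].
    - move=> z [c [r [h ->]]] gz.
      have Jr : J (r * (1 - e)).
        exists (- c); split; first exact: C0N.
        by rewrite opprK -scalerA addrC; exact: gz.
      have r0 : r * (1 - e) = 0.
        have := eJ _ Jr; rewrite -mulrA mulrBl mul1r ee subrr mulr0.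
        by move/esym.
      have ry0 : r *: y = 0 by rewrite /y scalerA r0 scale0r.
      move: gz; rewrite ry0 !addr0 => gc; exact: C0disj.
  have nprop : ~ (A `<` A') := fun h => Amax _ h PA'.
  have A'A : A' `<=` A.
    by apply: contrapT => nsub; apply: nprop; split.
  have Ay : A y.
    by apply: A'A; exists 0, 1; split; [right | rewrite add0r scale1r].
  have J1e : J (1 - e) by exists y; split; [left | rewrite subrr linear0].
  have e1 : 1 - e = 0.
    by have := eJ _ J1e; rewrite mulrBl mul1r ee subrr => /esym.
  have e_1 : e = 1 by apply/eqP; rewrite eq_sym -subr_eq0 e1.
  apply: nd; have [c [hc ec]] := Je; exists c; split => //.
  by move: ec; rewrite e_1 scale1r.
have ex : forall v, exists c, C0 c /\ g c = v.
  move=> v; have [x gx] := gsurj v; have [c [hc e]] := dec x; exists c; split => //.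
  by move: e; rewrite linearB gx => /eqP; rewrite subr_eq0 => /eqP.
have uniq : forall c1 c2, C0 c1 -> C0 c2 -> g c1 = g c2 -> c1 = c2.
  move=> c1 c2 h1 h2 e; apply/eqP; rewrite -subr_eq0; apply/eqP; apply: C0disj.
  - exact: C0D h1 (C0N _ h2).
  - by rewrite linearB e subrr.
pose s v := projT1 (cid (ex v)).
have sP v : C0 (s v) /\ g (s v) = v by rewrite /s; case: cid.
have s_lin : linear s.
  move=> c v w; apply: uniq.
  - exact: (sP _).1.
  - by apply: C0D; [apply: C0Z; exact: (sP _).1 | exact: (sP _).1].
  - by rewrite linearP !(sP _).2.
by exists (mklin s_lin) => v; exact: (sP v).2.
Qed.

Lemma H1_of_pf (R : comPzRingType) : finite_product_of_fields R -> H1 R.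
Proof.
move=> [n [K [phi [[psi phiK psiK] phi1 phiD phiM]]]] I [I0 [ID IM]].
have phi0 : forall i, phi 0 i = 0.
  by move=> i; apply: (addrI (phi 0 i)); rewrite -phiD !addr0.
have phiS : forall (F : 'I_n -> R) j, phi (\sum_(k < n) F k) j = \sum_(k < n) phi (F k) j.
  move=> F j; apply: (big_rec2 (fun y1 y2 => phi y1 j = y2)); first exact: phi0.
  by move=> k y1 y2 _ <-; rewrite phiD.
have : forall i, exists r, I r /\ ((exists r', I r' /\ phi r' i != 0) -> phi r i != 0).
  move=> i; case: (pselect (exists r', I r' /\ phi r' i != 0)) => [[r' [h1 h2]]|nS].
  - by exists r'.
  - by exists 0; split => // /nS.
case/choice => rr hrr.
pose w i := psi (fun j => (phi (rr i) j)^-1).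
pose E i := psi (fun j => if j == i then 1 else 0).
pose c i := (w i * E i) * rr i.
have phic : forall i j, phi (c i) j = if j == i then (phi (rr j) j)^-1 * phi (rr j) j else 0.
  move=> i j; rewrite /c !phiM /w /E !psiK.
  by case: eqP => [->|_]; rewrite ?mulr1 ?mulr0 ?mul0r.
pose e := \sum_(i < n) c i.
have phie : forall j, phi e j = (phi (rr j) j)^-1 * phi (rr j) j.
  move=> j; rewrite phiS (bigD1 j) //= phic eqxx big1 ?addr0 //.
  by move=> i /negbTE ni; rewrite phic eq_sym ni.
exists e; split.
  apply: big_ind => //; move=> i _; apply: IM; exact: (hrr i).1.
move=> r Ir; apply: (can_inj phiK); apply: functional_extensionality_dep => j.
rewrite phiM phie; case: (eqVneq (phi (rr j) j) 0) => h.
- have -> : phi r j = 0.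
    apply/eqP; apply: contraT => nz.
    by have := (hrr j).2 (ex_intro _ r (conj Ir nz)); rewrite h eqxx.
  by rewrite mul0r.
- by rewrite mulVf // mulr1.
Qed.

Local Close Scope classical_set_scope.

Lemma H1_of_split (R : comPzRingType) :
  split_torsion_pair (@isPerpRel R) (@isRel R) -> H1 R.
Proof.
move=> [_ hs] I [I0 [ID IM]].
pose S := @Subm R R^o I I0 ID (fun a x h => IM a x h).
pose pi := mklin (qpi_lin S).
pose M := @KRep R R^o (Q S) pi (mklin (@zlin R R^o (Q S))).
have [s [hst _]] := hs (Tr M) M (Fr M) (ftr M) (gtr M)
   (@perp_of_trivial R (Tr M) (fun y => rV0_eq0 y)) (@Fr_rel R M) (tors_ses M).
pose u : R := ft s (gtf (M:=M) (1 : R^o)).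
have hu : I (1 - u).
  have := hst (gtf (M:=M) (1 : R^o)) => /(congr1 (fun p => (ival p).1)) /= h.
  by apply/(qpiP S); rewrite -h.
exists (1 - u); split => // r Ir.
have g0 : gtf (M:=M) (r : R^o) = 0.
  by apply: val_inj => /=; rewrite (proj2 (qpi0 S r) Ir).
have gr : gtf (M:=M) (r : R^o) = r *: gtf (M:=M) (1 : R^o).
  have := linearZZ (mklin (gtf_lin (M:=M))) r (1 : R^o).
  by rewrite !mklinE => <-; congr gtf; rewrite /GRing.scale /= mulr1.
have : r *: (u : R^o) = 0.
  by rewrite /u -linearZZ -gr g0 linear0.
rewrite /GRing.scale /= => ru.
by rewrite mulrBr mulr1 ru subr0.
Qed.

Definition is_field_idem (R : comPzRingType) (e : R) :=
  forall x, x * e = x -> x != 0 -> exists y, x * y = e.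

Record fidem (R : comPzRingType) := FIdem {
  fe : R;
  fe_idem : fe * fe = fe;
  fe_nz : fe != 0;
  fe_field : is_field_idem fe }.

Section FieldOf.
Variables (R : comPzRingType) (E : fidem R).
Let e := fe E.
Definition efP : {pred R} := fun x => x * e == x.
Lemma efP_closed : zmod_closed efP.
Proof.
split; first by rewrite unfold_in /= mul0r.
move=> x y; rewrite !unfold_in /= => /eqP hx /eqP hy.
by rewrite mulrBl hx hy.
Qed.
HB.instance Definition _ := GRing.isZmodClosed.Build R efP efP_closed.
Record EF := MkEF { efval : R; efvalP : efval \in efP }.
HB.instance Definition _ := [isSub for efval].
HB.instance Definition _ := [Choice of EF by <:].
HB.instance Definition _ := [SubChoice_isSubZmodule of EF by <:].

Lemma ef_one_in : e \in efP.
Proof. by rewrite unfold_in /= fe_idem. Qed.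
Definition ef_one : EF := MkEF ef_one_in.
Lemma ef_mul_in (a b : EF) : efval a * efval b \in efP.
Proof.
have := efvalP b; rewrite !unfold_in /= => /eqP hb.
by rewrite -mulrA hb.
Qed.
Definition ef_mul (a b : EF) : EF := MkEF (ef_mul_in a b).
Lemma ef_mulA : associative ef_mul.
Proof. by move=> a b c; apply: val_inj; rewrite /= mulrA. Qed.
Lemma ef_mulC : commutative ef_mul.
Proof. by move=> a b; apply: val_inj; rewrite /= mulrC. Qed.
Lemma ef_mul1 : left_id ef_one ef_mul.
Proof.
move=> a; apply: val_inj => /=; have := efvalP a; rewrite unfold_in /= => /eqP ha.
by rewrite mulrC.
Qed.
Lemma ef_mulDl : left_distributive ef_mul +%R.
Proof. by move=> a b c; apply: val_inj; rewrite /= mulrDl. Qed.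
Lemma ef_one_nz : ef_one != 0.
Proof. by apply/eqP => /(congr1 val) /= h; move: (fe_nz E); rewrite -/e h eqxx. Qed.
HB.instance Definition _ := GRing.Zmodule_isComNzRing.Build EF
  ef_mulA ef_mulC ef_mul1 ef_mulDl ef_one_nz.

Lemma ef_inv_in (y : R) : y * e \in efP.
Proof. by rewrite unfold_in /= -mulrA fe_idem. Qed.
Definition ef_inv (a : EF) : EF :=
  match pselect (exists y, efval a * y = e) with
  | left h => MkEF (ef_inv_in (projT1 (cid h)))
  | right _ => 0
  end.
Lemma ef_mulVf (a : EF) : a != 0 -> ef_inv a * a = 1.
Proof.
move=> a0; rewrite /ef_inv; case: pselect => [h|nh].
- apply: val_inj => /=; case: cid => y /= hy.
  have := efvalP a; rewrite unfold_in /= => /eqP ha.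
  by rewrite mulrC mulrA hy fe_idem.
- exfalso; apply: nh; have := @fe_field R E (efval a); apply.
  + by have := efvalP a; rewrite unfold_in => /eqP.
  + by apply: contra a0 => /eqP h; apply/eqP/val_inj.
Qed.
Lemma ef_inv0 : ef_inv 0 = 0.
Proof.
rewrite /ef_inv; case: pselect => [[y hy]|//].
by exfalso; move: hy (fe_nz E); rewrite /= mul0r -/e => <-; rewrite eqxx.
Qed.
HB.instance Definition _ := GRing.ComNzRing_isField.Build EF ef_mulVf ef_inv0.
Definition EFf : fieldType := EF.
Lemma ef_valM (a b : EF) : efval (a * b) = efval a * efval b.
Proof. by []. Qed.
Lemma ef_val1 : efval (1 : EF) = e.
Proof. by []. Qed.
Lemma ef_valD (a b : EF) : efval (a + b) = efval a + efval b.
Proof. by []. Qed.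
End FieldOf.

HB.instance Definition _ (R : comPzRingType) := gen_eqMixin (fidem R).

Section Good.
Variable R : comPzRingType.
Definition orthr (a b : fidem R) := fe a * fe b == 0.
Definition Good (e : R) := exists s : seq (fidem R), pairwise orthr s /\ \sum_(a <- s) fe a = e.

Lemma good_mem s x : pairwise orthr s -> x \in s -> fe x * \sum_(a <- s) fe a = fe x.
Proof.
elim: s => [|a s IH] //= /andP[ha hs]; rewrite inE big_cons mulrDr => /orP[/eqP ->|xs].
- rewrite fe_idem mulr_sumr big1_seq ?addr0 // => b /andP[_ bs]; exact: (eqP (allP ha b bs)).
- rewrite IH //; have /eqP := allP ha x xs; rewrite mulrC => ->; by rewrite add0r.
Qed.

Lemma good_add f g : Good f -> Good g -> f * g = 0 -> Good (f + g).
Proof.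
move=> [s1 [p1 e1]] [s2 [p2 e2]] fg; exists (s1 ++ s2); split; last by rewrite big_cat e1 e2.
rewrite pairwise_cat p1 p2 !andbT; apply/allrelP => x y xs ys.
by rewrite /orthr -(good_mem p1 xs) -(good_mem p2 ys) e1 e2 mulrACA fg mulr0.
Qed.

Lemma good0 : Good 0.
Proof. by exists [::]; rewrite big_nil. Qed.

Lemma good_field (E : fidem R) : Good (fe E).
Proof. by exists [:: E]; rewrite big_seq1. Qed.

Lemma split_step (hH : H1 R) (e : R) : e * e = e ->
  e = 0 \/ (exists E : fidem R, fe E = e) \/
  exists f g, [/\ f * f = f, g * g = g, f * g = 0, f + g = e & (f != 0) && (g != 0)].
Proof.
move=> ee; case: (eqVneq e 0) => [->|e0]; first by left.
right; case: (pselect (is_field_idem e)) => [fi|nf].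
  by left; exists (FIdem ee e0 fi).
right.
have [x [xe [x0 nx]]] : exists x, x * e = x /\ x != 0 /\ ~ exists y, x * y = e.
  apply: contrapT => H; apply: nf => x xe x0; apply: contrapT => ny; apply: H.
  by exists x.
pose J r := exists t, r = x * t.
have Jid : ideal J.
  split; [|split].
  - by exists 0; rewrite mulr0.
  - by move=> a b [t1 ->] [t2 ->]; exists (t1 + t2); rewrite mulrDr.
  - by move=> r a [t ->]; exists (r * t); rewrite mulrCA.
have [f [[t ft] fJ]] := hH J Jid.
have xf : x * f = x by apply: fJ; exists 1; rewrite mulr1.
have ff : f * f = f by apply: fJ; exists t.
have fe' : f * e = f by rewrite ft mulrAC xe.
exists f, (e - f); split.
- exact: ff.
- by rewrite mulrBl !mulrBr ee ff [e * f]mulrC fe' subrr subr0.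
- by rewrite mulrBr fe' ff subrr.
- by rewrite addrC subrK.
- apply/andP; split.
  + by apply/eqP => f0; move: x0; rewrite -xf f0 mulr0 eqxx.
  + apply/eqP => /eqP; rewrite subr_eq0 => /eqP ef; apply: nx; exists t.
    by rewrite -ft ef.
Qed.

Lemma good1 : H1 R -> Good (1 : R).
Proof.
move=> hH; apply: contrapT => ng1.
pose X := {e : R | e * e = e /\ ~ Good e}.
have step : forall x : X, exists y : X, exists g,
    [/\ g * g = g, g != 0, sval y * g = 0 & sval y + g = sval x].
  move=> [e [ee ng]].
  have [e0|[[E hE]|[f [g [ff gg fg fge /andP[f0 g0]]]]]] := split_step hH ee.
  - by exfalso; apply: ng; rewrite e0; exact: good0.
  - by exfalso; apply: ng; rewrite -hE; exact: good_field.
  - case: (pselect (Good f)) => gf.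
    + case: (pselect (Good g)) => gg'.
        by exfalso; apply: ng; rewrite -fge; exact: good_add.
      exists (exist _ g (conj gg gg')), f; split => //=.
      * by rewrite mulrC.
      * by rewrite addrC.
    + by exists (exist _ f (conj ff gf)), g; split.
have [st hst] := choice step.
pose x0 : X := exist _ 1 (conj (mulr1 1) ng1).
pose F k := sval (iter k st x0).
have hF : forall k, exists g, [/\ g * g = g, g != 0, F k.+1 * g = 0 & F k.+1 + g = F k].
  by move=> k; exact: (hst (iter k st x0)).
have Fidem : forall k, F k * F k = F k by move=> k; exact: (svalP (iter k st x0)).1.
have FS : forall k, F k.+1 * F k = F k.+1.
  move=> k; have [g [_ _ h1 h2]] := hF k.
  by rewrite -[in LHS]h2 mulrDr h1 addr0 Fidem.
have Fle : forall k m, (k <= m)%N -> F m * F k = F m.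
  move=> k m; elim: m => [|m IH]; first by rewrite leqn0 => /eqP ->; exact: Fidem.
  rewrite leq_eqVlt => /orP[/eqP ->|]; first exact: Fidem.
  by rewrite ltnS => km; rewrite -[in LHS](FS m) -mulrA (IH km) FS.
have Jup : forall r k m, (k <= m)%N -> r * F k = 0 -> r * F m = 0.
  by move=> r k m km h; rewrite -(Fle _ _ km) [F m * F k]mulrC mulrA h mul0r.
pose J r := exists k, r * F k = 0.
have Jid : ideal J.
  split; [|split].
  - by exists 0%N; rewrite mul0r.
  - move=> a b [k1 h1] [k2 h2]; exists (maxn k1 k2); rewrite mulrDl.
    by rewrite (Jup _ _ _ (leq_maxl k1 k2) h1) (Jup _ _ _ (leq_maxr k1 k2) h2) addr0.
  - by move=> r a [k h]; exists k; rewrite -mulrA h mulr0.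
have [e [[k ek] eJ]] := hH J Jid.
have [g [gg g0 gF gS]] := hF k.
have Jg : J g by exists k.+1; rewrite mulrC.
have gFk : g * F k = g by rewrite -gS mulrDr [g * _]mulrC gF add0r gg.
move: g0; rewrite -(eJ _ Jg) -gFk -mulrA [F k * e]mulrC ek mulr0 eqxx.
by [].
Qed.

Lemma pf_of_good1 : Good (1 : R) -> finite_product_of_fields R.
Proof.
move=> [s [ps s1]].
pose n := size s.
pose E (i : 'I_n) := tnth (in_tuple s) i.
have orth : forall i j : 'I_n, i != j -> fe (E i) * fe (E j) = 0.
  move=> i j ij; have /(pairwiseP (E i)) hp := ps.
  have ltn_i : (i < size s)%N := ltn_ord i.
  have ltn_j : (j < size s)%N := ltn_ord j.
  rewrite /E !(tnth_nth (E i)) /=.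
  case: (ltngtP i j) => [lij|lji|eij].
  - by apply/eqP; apply: hp.
  - by rewrite mulrC; apply/eqP; apply: hp.
  - by move: ij; rewrite (val_inj eij) eqxx.
pose K (i : 'I_n) : fieldType := EFf (E i).
pose phi (r : R) : forall i, K i := fun i => MkEF (ef_inv_in (E i) r).
pose psi (v : forall i, K i) : R := \sum_(i < n) efval (v i).
have sumE : \sum_(i < n) fe (E i) = 1 by rewrite -s1 (big_tnth _ _ s).
exists n, K, phi; split.
- exists psi.
  + move=> r; rewrite /psi /phi /=.
    by rewrite -mulr_sumr sumE mulr1.
  + move=> v; apply: functional_extensionality_dep => j; apply: val_inj => /=.
    rewrite /psi mulr_suml (bigD1 j) //= big1 ?addr0.
    * by have := efvalP (v j); rewrite unfold_in => /eqP.
    * move=> i ij; have := efvalP (v i); rewrite unfold_in => /eqP <-.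
      by rewrite -mulrA orth ?mulr0.
- by move=> i; apply: val_inj; rewrite /= mul1r.
- by move=> x y i; apply: val_inj; rewrite /= mulrDl.
- move=> x y i; apply: val_inj => /=.
  by rewrite mulrACA fe_idem.
Qed.
End Good.


Theorem proposition3p9 (R : comPzRingType) :
  torsion_pair (@isPerpRel R) (@isRel R) /\
  (split_torsion_pair (@isPerpRel R) (@isRel R) <-> finite_product_of_fields R).
Proof.
split; first exact: part1.
split.
- move=> h; apply: pf_of_good1; apply: good1; exact: H1_of_split.
- move=> h; split; first exact: part1.
  apply: split_of_SS; apply: SS_of_H1; exact: H1_of_pf.
Qed.
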